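(* Let $G=(V_1,\ldots,V_p,E)$ be a finite $p$-partite graph viewed as a network in which each vertex is a node that can send messages to its neighbors, and let $k_1,\ldots,k_p$ be nonnegative integers. If every node runs the distributed peeling protocol described in the context with threshold $k(v)=k_i$ for $v\in V_i$, then once no messages remain in transit, the subgraph of $G$ induced by the nodes that are still active equals $G(k_1,\ldots,k_p)$.
   Context: A $p$-partite graph $G=(V_1,\ldots,V_p,E)$ has vertex set partitioned into disjoint sets $V_1,\ldots,V_p$ with no edges inside any $V_i$. $G(k_1,\ldots,k_p)$ denotes the largest subgraph of $G$ in which every vertex of $V_i$ has degree at least $k_i$ for every $i$ (unique, possibly empty). Distributed peeling protocol with thresholds $k(v)$: each node $v$ keeps a counter $degree$, initialized to $\deg_G(v)$, and a status, initially active. Initially, if $degree<k(v)$, node $v$ sends an ''off'' message to each of its neighbors and becomes inactive. An active node, upon receiving a message, sets $degree=degree-1$; if then $degree<k(v)$, it sends an ''off'' message to each of its neighbors and becomes inactive. An inactive node remains inactive and ignores all incoming messages. *)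

(* Defs.v *)
From mathcomp Require Import all_boot.
Set Implicit Arguments. Unset Strict Implicit. Unset Printing Implicit Defensive.

Section Peeling.
Variables (T : finType) (e : rel T) (p : nat) (part : T -> 'I_p) (k : 'I_p -> nat).

Definition nbrs (v : T) : {set T} := [set w | e v w].
Definition degG (v : T) : nat := #|nbrs v|.
Definition thr (v : T) : nat := k (part v).

Definition good (S : {set T}) : bool :=
  [forall v in S, thr v <= #|[set w in S | e v w]|].

(* Vertex set of G(k_1,...,k_p): union of all good sets (itself good, hence the largest) *)
Definition coreV : {set T} := \bigcup_(S | good S) S.

Definition induced (S : {set T}) : {set T} * {set T * T} :=
  (S, [set uv | (uv.1 \in S) && (uv.2 \in S) && e uv.1 uv.2]).

(* G(k_1,...,k_p) as a subgraph of G (the largest such subgraph is induced) *)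
Definition Gk : {set T} * {set T * T} := induced coreV.

(* a message (u, w) is an "off" message sent by u to w, currently in transit *)
Record state := State {
  active : T -> bool;
  degree : T -> nat;
  transit : seq (T * T) }.

Definition off_msgs (v : T) : seq (T * T) := [seq (v, w) | w <- enum (nbrs v)].

Definition init_state : state :=
  State (fun v => ~~ (degG v < thr v)) degG
        (flatten [seq off_msgs v | v <- enum T & degG v < thr v]).

Definition deliver (s : state) (m : T * T) : state :=
  let w := m.2 in
  let rest := rem m (transit s) in
  if active s w then
    let d := (degree s w).-1 in
    let deg' := fun x => if x == w then d else degree s x in
    if d < thr w then
      State (fun x => if x == w then false else active s x) deg'
            (rest ++ off_msgs w)
    else State (active s) deg' rest
  else State (active s) (degree s) rest.

Inductive step : state -> state -> Prop :=
| step_deliver s m : m \in transit s -> step s (deliver s m).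

Inductive reachable : state -> Prop :=
| reach_init : reachable init_state
| reach_step s s' : reachable s -> step s s' -> reachable s'.

Definition active_set (s : state) : {set T} := [set v | active s v].

End Peeling.

(* Main.v *)
Require Import Defs.
From mathcomp Require Import all_boot.
Set Implicit Arguments. Unset Strict Implicit. Unset Printing Implicit Defensive.

Section Proof.
Variables (T : finType) (e : rel T) (p : nat) (part : T -> 'I_p) (k : 'I_p -> nat).
Hypotheses (esym : symmetric e) (eirr : irreflexive e).

Notation thr := (thr part k).
Notation coreV := (coreV e part k).

Definition cnt (s : state T) (v : T) : {set T} :=
  [set u | e v u && (active s u || ((u, v) \in transit s))].

Record Inv (s : state T) : Prop := {
  i_uniq : uniq (transit s);
  i_msg : forall m, m \in transit s -> e m.1 m.2 && ~~ active s m.1;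
  i_thr : forall v, active s v -> thr v <= degree s v;
  i_deg : forall v, active s v -> degree s v = #|cnt s v|;
  i_core : forall v, v \in coreV -> active s v }.

Lemma coreV_good v : v \in coreV -> thr v <= #|[set w in coreV | e v w]|.
Proof.
move=> /bigcupP [S gS vS].
move/forallP: (gS) => /(_ v); rewrite vS /= => H.
apply: leq_trans H _; apply: subset_leq_card; apply/subsetP => w.
rewrite !inE => /andP [wS ->]; rewrite andbT; apply/bigcupP; by exists S.
Qed.

Lemma mem_off v m : (m \in off_msgs e v) = (m.1 == v) && e v m.2.
Proof.
case: m => a b; rewrite /off_msgs /=.
apply/mapP/andP => [[w] | [/eqP -> H]].
  by rewrite mem_enum inE => H [-> ->].
by exists b => //; rewrite mem_enum inE.
Qed.

Lemma flat_mem (s : seq T) a b :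
  ((a, b) \in flatten [seq off_msgs e v | v <- s]) = (a \in s) && e a b.
Proof.
elim: s => [|v s IH] //=; rewrite mem_cat IH mem_off in_cons /=.
case: (a =P v) => [-> | _] /=; last by [].
by case: (v \in s); case: (e v b).
Qed.

Lemma flat_uniq (s : seq T) : uniq s -> uniq (flatten [seq off_msgs e v | v <- s]).
Proof.
elim: s => [|v s IH] //= /andP [vs us]; rewrite cat_uniq IH // andbT.
apply/andP; split.
  rewrite /off_msgs map_inj_uniq ?enum_uniq //; by move=> x y [].
apply/hasPn => [[a b]] /=; rewrite flat_mem => /andP [as_ _].
rewrite mem_off /=; apply/negP => /andP [/eqP av _]; by rewrite -av as_ in vs.
Qed.

Lemma Inv_init : Inv (init_state e part k).
Proof.
have Hm : forall a b, ((a, b) \in transit (init_state e part k)) =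
                      (degG e a < thr a) && e a b.
  move=> a b; rewrite /= flat_mem mem_filter mem_enum andbT //.
split => /=.
- by rewrite flat_uniq // filter_uniq // enum_uniq.
- move=> [a b]; rewrite Hm /= => /andP [-> ->]; by [].
- by move=> v; rewrite -leqNgt.
- move=> v _; rewrite /degG /nbrs /cnt; apply: eq_card => u.
  rewrite !inE Hm /=; case evu: (e v u); rewrite //= esym evu andbT.
  by case: (degG e u < thr u).
- move=> v /coreV_good H; rewrite -leqNgt; apply: leq_trans H _.
  by apply: subset_leq_card; apply/subsetP => w; rewrite !inE => /andP [_ ->].
Qed.

Lemma Inv_step s m : Inv s -> m \in transit s -> Inv (deliver e part k s m).
Proof.
move=> [Hu Hmsg Hthr Hdeg Hcore] mt.
have Hrem y : (y \in rem m (transit s)) = (y != m) && (y \in transit s).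
  by rewrite (mem_rem_uniq m Hu).
case: m mt Hrem => x w mt Hrem.
have /andP [exw xin] := Hmsg _ mt; rewrite /= in exw xin.
rewrite /deliver /=.
case aw: (active s w); last first.
  split => //=.
  - exact: rem_uniq.
  - by move=> m'; rewrite Hrem => /andP [_ /Hmsg].
  - move=> v av; have vw : v != w by apply/eqP => E; rewrite E aw in av.
    rewrite Hdeg //; apply: eq_card => u; rewrite !inE /= Hrem.
    have -> : ((u, v) != (x, w)) by apply/eqP => [[_ E]]; rewrite E eqxx in vw.
    by [].
have xc : x \in cnt s w by rewrite inE esym exw mt orbT.
have Hd : (degree s w).-1 = #|cnt s w :\ x|.
  by rewrite Hdeg // (cardsD1 x) xc.
have Hc' : forall u, (u \in cnt s w :\ x) =
   e w u && (active s u || ((u, w) \in rem (x, w) (transit s))).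
  move=> u; rewrite !inE Hrem; case: (u =P x) => [-> | ne].
    by rewrite (negbTE xin) eqxx /= andbF.
  have -> : ((u, w) != (x, w)) by apply/eqP => [[]].
  by [].
case: ifP => dlt.
  split => /=.
  - rewrite cat_uniq rem_uniq //=.
    rewrite /off_msgs map_inj_uniq ?enum_uniq ?andbT; last by move=> a b [].
    apply/hasPn => [[a b]]; rewrite mem_off /= => /andP [/eqP -> _].
    by rewrite Hrem; apply/negP => /andP [_ /Hmsg /andP [_]]; rewrite aw.
  - move=> [a b]; rewrite mem_cat Hrem mem_off /= => /orP [/andP [_ /Hmsg /andP [-> /=]] | /andP [/eqP -> ->]].
      by case: (a == w).
    by rewrite eqxx.
  - move=> v; case: (v =P w) => // _; exact: Hthr.
  - move=> v; case: (v =P w) => // /eqP vw av; rewrite Hdeg //; apply: eq_card => u; rewrite !inE mem_cat Hrem mem_off /=.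
    have -> : ((u, v) != (x, w)) by apply/eqP => [[_ E]]; rewrite E eqxx in vw.
    case: (u =P w) => [-> | _] /=; last by rewrite orbF.
    by rewrite aw (esym w v); case: (e v w); rewrite //= orbT.
  - move=> v vc; case: eqP => [E | _]; last exact: Hcore.
    subst v; move: dlt; rewrite Hd ltnNge => H.
    suff HH : thr w <= #|cnt s w :\ x| by rewrite HH in H. apply: leq_trans (coreV_good vc) _.
    apply: subset_leq_card; apply/subsetP => u; rewrite !inE => /andP [uc ewu].
    rewrite ewu (Hcore _ uc) andbT /=.
    by apply/eqP => E; move: xin; rewrite -E (Hcore _ uc).
split => //=.
- exact: rem_uniq.
- by move=> m'; rewrite Hrem => /andP [_ /Hmsg].
- move=> v av; case: (v =P w) => [-> | _]; last exact: Hthr.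
  by rewrite leqNgt dlt.
- move=> v av; case: (v =P w) => [-> | nv].
    rewrite Hd; apply: eq_card => u; by rewrite Hc' inE.
  rewrite Hdeg //; apply: eq_card => u; rewrite !inE Hrem.
  have -> : ((u, v) != (x, w)) by apply/eqP => [[_ E]].
  by [].
Qed.

Lemma Inv_reach s : reachable e part k s -> Inv s.
Proof.
elim => [|s0 s1 _ IH st]; first exact: Inv_init.
by case: st IH => s2 m mt I; apply: Inv_step.
Qed.

Lemma final s : reachable e part k s -> transit s = [::] -> active_set s = coreV.
Proof.
move=> /Inv_reach [Hu Hmsg Hthr Hdeg Hcore] ht.
apply/setP => v; apply/idP/idP => [|vc]; last by rewrite inE Hcore.
rewrite inE => av; apply/bigcupP; exists (active_set s); last by rewrite inE.
apply/forallP => u; apply/implyP; rewrite inE => au.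
rewrite (leq_trans (Hthr _ au)) // Hdeg //.
apply: subset_leq_card; apply/subsetP => w; rewrite !inE ht in_nil orbF.
by move=> /andP [-> ->].
Qed.

End Proof.

Theorem corollary4 (T : finType) (e : rel T) (p : nat) (part : T -> 'I_p)
    (k : 'I_p -> nat) :
  symmetric e -> irreflexive e ->
  (forall u v, e u v -> part u != part v) ->
  forall s : state T,
    reachable e part k s -> transit s = [::] ->
    induced e (active_set s) = Gk e part k.
Proof.
move=> es ei _ s r ht; rewrite /Gk.
by rewrite (final es r ht).
Qed.
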